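(* All the rules of each calculus of the family $\mathsf{CL}^*$ are height-preserving invertible: if the conclusion of a rule instance is derivable with height at most $n$, then each of its premisses is derivable with height at most $n$.
   Context: Height of a derivation = number of nodes on its longest branch minus one. Syntax: world labels $x,y,z,\dots$; neighbourhood labels $a,b,c,\dots$, including $\{x\}$ for each world label $x$. Relational atoms: $a\in N(x)$, $x\in a$, $a\subseteq b$. Labelled formulas: relational atoms, $x:A$, $a\Vdash^{\exists}A$, $a\Vdash^{\forall}A$, $x\Vdash_aA|B$ for formulas of $\mathcal{L}::=p\mid\bot\mid A\wedge B\mid A\lor B\mid A\to B\mid A>B$. Sequents $\Gamma\Rightarrow\Delta$: multisets, relational atoms only in $\Gamma$. Rules of $\mathsf{CL}$ (''(u!)'': $u$ not in conclusion; notation premisses / conclusion): initial sequents $x:p,\Gamma\Rightarrow\Delta,x:p$ ($p$ atomic), $x:\bot,\Gamma\Rightarrow\Delta$; G3 rules for $\wedge,\vee,\to$ on $x:A$; L$\forall$: $x:A,x\in a,a\Vdash^\forall A,\Gamma\Rightarrow\Delta$ / $x\in a,a\Vdash^\forall A,\Gamma\Rightarrow\Delta$; R$\forall$(x!): $x\in a,\Gamma\Rightarrow\Delta,x:A$ / $\Gamma\Rightarrow\Delta,a\Vdash^\forall A$; L$\exists$(x!): $x\in a,x:A,\Gamma\Rightarrow\Delta$ / $a\Vdash^\exists A,\Gamma\Rightarrow\Delta$; R$\exists$: $x\in a,\Gamma\Rightarrow\Delta,x:A,a\Vdash^\exists A$ / $x\in a,\Gamma\Rightarrow\Delta,a\Vdash^\exists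 A$; R$>$(a!): $a\in N(x),a\Vdash^\exists A,\Gamma\Rightarrow\Delta,x\Vdash_aA|B$ / $\Gamma\Rightarrow\Delta,x:A>B$; L$>$: $a\in N(x),x:A>B,\Gamma\Rightarrow\Delta,a\Vdash^\exists A$ and $x\Vdash_aA|B,a\in N(x),x:A>B,\Gamma\Rightarrow\Delta$ / $a\in N(x),x:A>B,\Gamma\Rightarrow\Delta$; R$|$: $c\in N(x),c\subseteq a,\Gamma\Rightarrow\Delta,x\Vdash_aA|B,c\Vdash^\exists A$ and $c\in N(x),c\subseteq a,\Gamma\Rightarrow\Delta,x\Vdash_aA|B,c\Vdash^\forall A\to B$ / $c\in N(x),c\subseteq a,\Gamma\Rightarrow\Delta,x\Vdash_aA|B$; L$|$(c!): $c\in N(x),c\subseteq a,c\Vdash^\exists A,c\Vdash^\forall A\to B,\Gamma\Rightarrow\Delta$ / $x\Vdash_aA|B,\Gamma\Rightarrow\Delta$; Ref: $a\subseteq a,\Gamma\Rightarrow\Delta$ / $\Gamma\Rightarrow\Delta$; Tr: $c\subseteq a,c\subseteq b,b\subseteq a,\Gamma\Rightarrow\Delta$ / $c\subseteq b,b\subseteq a,\Gamma\Rightarrow\Delta$; L$\subseteq$: $x\in a,a\subseteq b,x\in b,\Gamma\Rightarrow\Delta$ / $x\in a,a\subseteq b,\Gamma\Rightarrow\Delta$. Extension rules: N(a!): $a\in N(x),\Gamma\Rightarrow\Delta$ / $\Gamma\Rightarrow\Delta$; 0(y!): $y\in a,a\in N(x),\Gamma\Rightarrow\Delta$ / $a\in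 N(x),\Gamma\Rightarrow\Delta$; T(a!): $x\in a,a\in N(x),\Gamma\Rightarrow\Delta$ / $\Gamma\Rightarrow\Delta$; W: $x\in a,a\in N(x),\Gamma\Rightarrow\Delta$ / $a\in N(x),\Gamma\Rightarrow\Delta$; Single: $x\in\{x\},\{x\}\in N(x),\Gamma\Rightarrow\Delta$ / $\{x\}\in N(x),\Gamma\Rightarrow\Delta$; C: $\{x\}\in N(x),\{x\}\subseteq a,a\in N(x),\Gamma\Rightarrow\Delta$ / $a\in N(x),\Gamma\Rightarrow\Delta$; Repl$_1$: $y\in\{x\},At(x),At(y),\Gamma\Rightarrow\Delta$ / $y\in\{x\},At(x),\Gamma\Rightarrow\Delta$; Repl$_2$: same premiss / $y\in\{x\},At(y),\Gamma\Rightarrow\Delta$, with $At(x)$ among $x:P$ ($P$ atomic), $x\in a$, $a\in N(x)$, $x\in\{z\}$; U$_1$(c!): $z\in c,c\in N(x),a\in N(x),y\in a,b\in N(y),z\in b,\Gamma\Rightarrow\Delta$ / $a\in N(x),y\in a,b\in N(y),z\in b,\Gamma\Rightarrow\Delta$; U$_2$(c!): $z\in c,c\in N(y),a\in N(x),y\in a,b\in N(x),z\in b,\Gamma\Rightarrow\Delta$ / $a\in N(x),y\in a,b\in N(x),z\in b,\Gamma\Rightarrow\Delta$; A$_1$: $b\in N(y),a\in N(x),y\in a,b\in N(x),\Gamma\Rightarrow\Delta$ / $a\in N(x),y\in a,b\in N(x),\Gamma\Rightarrow\Delta$; A$_2$: $b\in N(x),a\in N(x),y\in a,b\in N(y),\Gamma\Rightarrow\Delta$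 / $a\in N(x),y\in a,b\in N(y),\Gamma\Rightarrow\Delta$; plus contracted instances of U$_1$,U$_2$,A$_1$. Family $\mathsf{CL}^*$: $\mathsf{CL}$; $\mathsf{CL}^N=\mathsf{CL}+$N,0; $\mathsf{CL}^T=\mathsf{CL}^N+$T; $\mathsf{CL}^W=\mathsf{CL}^T+$W; $\mathsf{CL}^C=\mathsf{CL}^W+$C,Single,Repl$_1$,Repl$_2$; $\mathsf{CL}^U=\mathsf{CL}+$U$_1$,U$_2$; $\mathsf{CL}^{NU},\dots,\mathsf{CL}^{CU}$ = $\mathsf{CL}^N,\dots,\mathsf{CL}^C$ + U$_1$,U$_2$; $\mathsf{CL}^A=\mathsf{CL}+$A$_1$,A$_2$; $\mathsf{CL}^{NA},\dots,\mathsf{CL}^{CA}$ = $\mathsf{CL}^N,\dots,\mathsf{CL}^C$ + A$_1$,A$_2$. *)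

(* Defs.v *)
From Stdlib Require Import List Permutation.
Import ListNotations.

Inductive form : Type :=
| Atom : nat -> form
| Bot  : form
| And  : form -> form -> form
| Or   : form -> form -> form
| Imp  : form -> form -> form
| Cond : form -> form -> form.

Definition wlab := nat.

(* neighbourhood labels: variables a,b,c,... and singletons {x} *)
Inductive nlab : Type :=
| NVar : nat -> nlab
| NSing : wlab -> nlab.

Inductive lform : Type :=
| LNb  : nlab -> wlab -> lform               (* a ∈ N(x) *)
| LIn  : wlab -> nlab -> lform               (* x ∈ a *)
| LSub : nlab -> nlab -> lform               (* a ⊆ b *)
| LW   : wlab -> form -> lform               (* x : A *)
| LEx  : nlab -> form -> lform               (* a ⊩∃ A *)
| LAll : nlab -> form -> lform               (* a ⊩∀ A *)
| LCmp : wlab -> nlab -> form -> form -> lform.  (* x ⊩_a A|B *)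

Definition relational (f : lform) : Prop :=
  match f with LNb _ _ | LIn _ _ | LSub _ _ => True | _ => False end.

(* sequents Γ ⇒ Δ; lists read as multisets (see seq_equiv) *)
Definition sequent := (list lform * list lform)%type.

Definition seq_equiv (S T : sequent) : Prop :=
  Permutation (fst S) (fst T) /\ Permutation (snd S) (snd T).

Definition wf_seq (S : sequent) : Prop :=
  forall f, In f (snd S) -> ~ relational f.

Definition w_in_nlab (x : wlab) (a : nlab) : Prop :=
  match a with NVar _ => False | NSing y => y = x end.

Definition w_occ (x : wlab) (f : lform) : Prop :=
  match f with
  | LNb a y => y = x \/ w_in_nlab x a
  | LIn y a => y = x \/ w_in_nlab x a
  | LSub a b => w_in_nlab x a \/ w_in_nlab x b
  | LW y _ => y = x
  | LEx a _ => w_in_nlab x a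
  | LAll a _ => w_in_nlab x a
  | LCmp y a _ _ => y = x \/ w_in_nlab x a
  end.

Definition n_occ (a : nlab) (f : lform) : Prop :=
  match f with
  | LNb b _ => b = a
  | LIn _ b => b = a
  | LSub b c => b = a \/ c = a
  | LW _ _ => False
  | LEx b _ => b = a
  | LAll b _ => b = a
  | LCmp _ b _ _ => b = a
  end.

Definition w_fresh (x : wlab) (S : sequent) : Prop :=
  forall f, In f (fst S ++ snd S) -> ~ w_occ x f.

Definition n_fresh (n : nat) (S : sequent) : Prop :=
  forall f, In f (fst S ++ snd S) -> ~ n_occ (NVar n) f.

(* L' is obtained from the multiset L by contracting duplicated items *)
Definition contraction (L' L : list lform) : Prop :=
  (forall f, In f L -> In f L') /\ exists R, Permutation L (L' ++ R).

(* atomic formulas At(x) allowed in the replacement rules, as schemata in x *)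
Inductive at_schema : Type :=
| AtW   : nat -> at_schema
| AtIn  : nlab -> at_schema
| AtNb  : nlab -> at_schema
| AtSg  : wlab -> at_schema.

Definition At (s : at_schema) (x : wlab) : lform :=
  match s with
  | AtW p => LW x (Atom p)
  | AtIn a => LIn x a
  | AtNb a => LNb a x
  | AtSg z => LIn x (NSing z)
  end.

Inductive rule : Type :=
| R_init | R_botL | R_andL | R_andR | R_orL | R_orR | R_impL | R_impR
| R_allL | R_allR | R_exL | R_exR | R_condR | R_condL | R_barR | R_barL
| R_Ref | R_Tr | R_subL
| R_N | R_0 | R_T | R_W | R_Single | R_C | R_Repl1 | R_Repl2
| R_U1 | R_U2 | R_A1 | R_A2.

Inductive inst : rule -> list sequent -> sequent -> Prop :=
| i_init : forall x p G D,
    inst R_init [] (LW x (Atom p) :: G, LW x (Atom p) :: D)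
| i_botL : forall x G D,
    inst R_botL [] (LW x Bot :: G, D)
| i_andL : forall x A B G D,
    inst R_andL [(LW x A :: LW x B :: G, D)] (LW x (And A B) :: G, D)
| i_andR : forall x A B G D,
    inst R_andR [(G, LW x A :: D); (G, LW x B :: D)] (G, LW x (And A B) :: D)
| i_orL : forall x A B G D,
    inst R_orL [(LW x A :: G, D); (LW x B :: G, D)] (LW x (Or A B) :: G, D)
| i_orR : forall x A B G D,
    inst R_orR [(G, LW x A :: LW x B :: D)] (G, LW x (Or A B) :: D)
| i_impL : forall x A B G D,
    inst R_impL [(G, LW x A :: D); (LW x B :: G, D)] (LW x (Imp A B) :: G, D)
| i_impR : forall x A B G D,
    inst R_impR [(LW x A :: G, LW x B :: D)] (G, LW x (Imp A B) :: D)
| i_allL : forall x a A G D,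
    inst R_allL [(LW x A :: LIn x a :: LAll a A :: G, D)]
                (LIn x a :: LAll a A :: G, D)
| i_allR : forall x a A G D,
    w_fresh x (G, LAll a A :: D) ->
    inst R_allR [(LIn x a :: G, LW x A :: D)] (G, LAll a A :: D)
| i_exL : forall x a A G D,
    w_fresh x (LEx a A :: G, D) ->
    inst R_exL [(LIn x a :: LW x A :: G, D)] (LEx a A :: G, D)
| i_exR : forall x a A G D,
    inst R_exR [(LIn x a :: G, LW x A :: LEx a A :: D)]
               (LIn x a :: G, LEx a A :: D)
| i_condR : forall x n A B G D,
    n_fresh n (G, LW x (Cond A B) :: D) ->
    inst R_condR [(LNb (NVar n) x :: LEx (NVar n) A :: G,
                   LCmp x (NVar n) A B :: D)]
                 (G, LW x (Cond A B) :: D)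
| i_condL : forall x a A B G D,
    inst R_condL [(LNb a x :: LW x (Cond A B) :: G, LEx a A :: D);
                  (LCmp x a A B :: LNb a x :: LW x (Cond A B) :: G, D)]
                 (LNb a x :: LW x (Cond A B) :: G, D)
| i_barR : forall x a c A B G D,
    inst R_barR [(LNb c x :: LSub c a :: G, LCmp x a A B :: LEx c A :: D);
                 (LNb c x :: LSub c a :: G, LCmp x a A B :: LAll c (Imp A B) :: D)]
                (LNb c x :: LSub c a :: G, LCmp x a A B :: D)
| i_barL : forall x a n A B G D,
    n_fresh n (LCmp x a A B :: G, D) ->
    inst R_barL [(LNb (NVar n) x :: LSub (NVar n) a :: LEx (NVar n) A
                  :: LAll (NVar n) (Imp A B) :: G, D)]
                (LCmp x a A B :: G, D)
| i_Ref : forall a G D,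
    inst R_Ref [(LSub a a :: G, D)] (G, D)
| i_Tr : forall a b c G D,
    inst R_Tr [(LSub c a :: LSub c b :: LSub b a :: G, D)]
              (LSub c b :: LSub b a :: G, D)
| i_subL : forall x a b G D,
    inst R_subL [(LIn x a :: LSub a b :: LIn x b :: G, D)]
                (LIn x a :: LSub a b :: G, D)
| i_N : forall x n G D,
    n_fresh n (G, D) ->
    inst R_N [(LNb (NVar n) x :: G, D)] (G, D)
| i_0 : forall x y a G D,
    w_fresh y (LNb a x :: G, D) ->
    inst R_0 [(LIn y a :: LNb a x :: G, D)] (LNb a x :: G, D)
| i_T : forall x n G D,
    n_fresh n (G, D) ->
    inst R_T [(LIn x (NVar n) :: LNb (NVar n) x :: G, D)] (G, D)
| i_W : forall x a G D,
    inst R_W [(LIn x a :: LNb a x :: G, D)] (LNb a x :: G, D)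
| i_Single : forall x G D,
    inst R_Single [(LIn x (NSing x) :: LNb (NSing x) x :: G, D)]
                  (LNb (NSing x) x :: G, D)
| i_C : forall x a G D,
    inst R_C [(LNb (NSing x) x :: LSub (NSing x) a :: LNb a x :: G, D)]
             (LNb a x :: G, D)
| i_Repl1 : forall x y s G D,
    inst R_Repl1 [(LIn y (NSing x) :: At s x :: At s y :: G, D)]
                 (LIn y (NSing x) :: At s x :: G, D)
| i_Repl2 : forall x y s G D,
    inst R_Repl2 [(LIn y (NSing x) :: At s x :: At s y :: G, D)]
                 (LIn y (NSing x) :: At s y :: G, D)
(* U1, U2, A1 also in their contracted instances (L' a contraction of the
   principal multiset; L' = the principal multiset gives the plain rule) *)
| i_U1 : forall x y z a b n L' G D,
    contraction L' [LNb a x; LIn y a; LNb b y; LIn z b] ->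
    n_fresh n (L' ++ G, D) ->
    inst R_U1 [(LIn z (NVar n) :: LNb (NVar n) x :: L' ++ G, D)] (L' ++ G, D)
| i_U2 : forall x y z a b n L' G D,
    contraction L' [LNb a x; LIn y a; LNb b x; LIn z b] ->
    n_fresh n (L' ++ G, D) ->
    inst R_U2 [(LIn z (NVar n) :: LNb (NVar n) y :: L' ++ G, D)] (L' ++ G, D)
| i_A1 : forall x y a b L' G D,
    contraction L' [LNb a x; LIn y a; LNb b x] ->
    inst R_A1 [(LNb b y :: L' ++ G, D)] (L' ++ G, D)
| i_A2 : forall x y a b G D,
    inst R_A2 [(LNb b x :: LNb a x :: LIn y a :: LNb b y :: G, D)]
              (LNb a x :: LIn y a :: LNb b y :: G, D).

Inductive level : Type := Lbase | LvN | LvT | LvW | LvC.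
Inductive ext : Type := Enone | EU | EA.

Definition calculus := (level * ext)%type.

Definition level_rank (l : level) : nat :=
  match l with Lbase => 0 | LvN => 1 | LvT => 2 | LvW => 3 | LvC => 4 end.

Definition in_calc (K : calculus) (r : rule) : Prop :=
  let (l, e) := K in
  match r with
  | R_N | R_0 => 1 <= level_rank l
  | R_T => 2 <= level_rank l
  | R_W => 3 <= level_rank l
  | R_C | R_Single | R_Repl1 | R_Repl2 => 4 <= level_rank l
  | R_U1 | R_U2 => e = EU
  | R_A1 | R_A2 => e = EA
  | _ => True
  end.

(* derivable K n S : S has a derivation in K of height <= n (height = number
   of nodes of the longest branch minus one); sequents are taken up to
   multiset equality and must be well formed. *)
Inductive derivable (K : calculus) : nat -> sequent -> Prop :=
| d_leaf : forall n r c S,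
    in_calc K r -> inst r [] c -> seq_equiv c S -> wf_seq S ->
    derivable K n S
| d_node : forall n r ps c S,
    in_calc K r -> inst r ps c -> seq_equiv c S -> wf_seq S ->
    (forall P, In P ps -> derivable K n P) ->
    derivable K (Datatypes.S n) S.

(* Main.v *)
Require Import Defs.
From Stdlib Require Import List Permutation Arith Lia.
Import ListNotations.

Definition rn := ((nat -> nat) * (nat -> nat))%type.
Definition ren_n (sg : rn) (a : nlab) : nlab :=
  match a with NVar k => NVar (snd sg k) | NSing x => NSing (fst sg x) end.
Definition ren_f (sg : rn) (f : lform) : lform :=
  match f with
  | LNb a x => LNb (ren_n sg a) (fst sg x)
  | LIn x a => LIn (fst sg x) (ren_n sg a)
  | LSub a b => LSub (ren_n sg a) (ren_n sg b)
  | LW x A => LW (fst sg x) A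
  | LEx a A => LEx (ren_n sg a) A
  | LAll a A => LAll (ren_n sg a) A
  | LCmp x a A B => LCmp (fst sg x) (ren_n sg a) A B
  end.
Definition ren_s (sg : rn) (S : sequent) : sequent :=
  (map (ren_f sg) (fst S), map (ren_f sg) (snd S)).
Definition ren_at (sg : rn) (t : at_schema) : at_schema :=
  match t with AtW p => AtW p | AtIn a => AtIn (ren_n sg a)
  | AtNb a => AtNb (ren_n sg a) | AtSg z => AtSg (fst sg z) end.
Lemma ren_At sg t x : ren_f sg (At t x) = At (ren_at sg t) (fst sg x).
Proof. destruct t; reflexivity. Qed.

Definition injective (h : nat -> nat) := forall a b, h a = h b -> a = b.

Lemma w_occ_ren sg x g : w_occ x (ren_f sg g) -> exists x', w_occ x' g /\ fst sg x' = x.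
Proof.
  destruct g; repeat match goal with a : nlab |- _ => destruct a end; simpl;
  intuition; subst; try discriminate; eauto;
  repeat match goal with H : NSing _ = NSing _ |- _ => injection H; clear H; intro end;
  subst; eauto.
Qed.

Lemma n_occ_ren sg n g : n_occ (NVar n) (ren_f sg g) -> exists n', n_occ (NVar n') g /\ snd sg n' = n.
Proof.
  destruct g; repeat match goal with a : nlab |- _ => destruct a end; simpl;
  intuition; try discriminate;
  repeat match goal with H : NVar _ = NVar _ |- _ => injection H; clear H; intro end;
  subst; eauto.
Qed.

Lemma w_fresh_ren sg x S : injective (fst sg) -> w_fresh x S -> w_fresh (fst sg x) (ren_s sg S).
Proof.
  intros Hi H f Hf Ho. unfold ren_s in Hf; simpl in Hf. rewrite <- map_app in Hf.
  apply in_map_iff in Hf as (g & <- & Hg).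
  apply w_occ_ren in Ho as (x' & Ho & He). apply Hi in He; subst. exact (H g Hg Ho).
Qed.

Lemma n_fresh_ren sg n S : injective (snd sg) -> n_fresh n S -> n_fresh (snd sg n) (ren_s sg S).
Proof.
  intros Hi H f Hf Ho. unfold ren_s in Hf; simpl in Hf. rewrite <- map_app in Hf.
  apply in_map_iff in Hf as (g & <- & Hg).
  apply n_occ_ren in Ho as (x' & Ho & He). apply Hi in He; subst. exact (H g Hg Ho).
Qed.

Lemma contraction_ren sg L' L : contraction L' L -> contraction (map (ren_f sg) L') (map (ren_f sg) L).
Proof.
  intros [H1 [R H2]]. split.
  - intros f Hf. apply in_map_iff in Hf as (g & <- & Hg). apply in_map; auto.
  - exists (map (ren_f sg) R). rewrite <- map_app. apply Permutation_map; auto.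
Qed.

Lemma inst_ren sg r ps c : injective (fst sg) -> injective (snd sg) ->
  inst r ps c -> inst r (map (ren_s sg) ps) (ren_s sg c).
Proof.
  intros I1 I2 Hi. destruct Hi; unfold ren_s; simpl; rewrite ?ren_At, ?map_app;
  try (constructor; fail).
  - apply (w_fresh_ren sg) in H; auto. constructor; exact H.
  - apply (w_fresh_ren sg) in H; auto. constructor; exact H.
  - apply (n_fresh_ren sg) in H; auto. constructor; exact H.
  - apply (n_fresh_ren sg) in H; auto. constructor; exact H.
  - apply (n_fresh_ren sg) in H; auto. constructor; exact H.
  - apply (w_fresh_ren sg) in H; auto. constructor; exact H.
  - apply (n_fresh_ren sg) in H; auto. constructor; exact H.
  - apply (n_fresh_ren sg) in H0; auto. unfold ren_s in H0; simpl in H0; rewrite map_app in H0.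
    apply (contraction_ren sg) in H. eapply i_U1; [exact H|exact H0].
  - apply (n_fresh_ren sg) in H0; auto. unfold ren_s in H0; simpl in H0; rewrite map_app in H0.
    apply (contraction_ren sg) in H. eapply i_U2; [exact H|exact H0].
  - apply (contraction_ren sg) in H. eapply i_A1; exact H.
Qed.
Lemma rel_ren sg f : relational (ren_f sg f) <-> relational f.
Proof. destruct f; simpl; tauto. Qed.

Lemma der_ren K n S sg : injective (fst sg) -> injective (snd sg) ->
  derivable K n S -> derivable K n (ren_s sg S).
Proof.
  intros I1 I2 H. induction H.
  - apply d_leaf with r (ren_s sg c); auto.
    + apply (inst_ren sg) in H0; auto.
    + destruct H1; split; unfold ren_s; simpl; apply Permutation_map; auto.
    + intros f Hf. unfold ren_s in Hf; simpl in Hf. apply in_map_iff in Hf as (g & <- & Hg).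
      rewrite rel_ren. apply H2; auto.
  - apply d_node with r (map (ren_s sg) ps) (ren_s sg c); auto.
    + apply inst_ren; auto.
    + destruct H1; split; unfold ren_s; simpl; apply Permutation_map; auto.
    + intros f Hf. unfold ren_s in Hf; simpl in Hf. apply in_map_iff in Hf as (g & <- & Hg).
      rewrite rel_ren. apply H2; auto.
    + intros P HP. apply in_map_iff in HP as (Q & <- & HQ). auto.
Qed.

Lemma der_mono K n S : derivable K n S -> forall m, n <= m -> derivable K m S.
Proof.
  intros H. induction H; intros m Hm.
  - eapply d_leaf; eauto.
  - destruct m as [|m]; [lia|]. eapply d_node; eauto. intros P HP. apply H4; auto. lia.
Qed.

Definition Prem K n ps := ps = [] \/ exists m, n = S m /\ forall P, In P ps -> derivable K m P.

Lemma der_inv K n S : derivable K n S -> exists r ps c, in_calc K r /\ inst r ps c /\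
  seq_equiv c S /\ wf_seq S /\ Prem K n ps.
Proof.
  intros H. destruct H.
  - exists r, [], c; repeat split; try apply H1; auto. left; auto.
  - exists r, ps, c; repeat split; try apply H1; auto. right; eauto.
Qed.

Lemma der_build K n r ps c S : in_calc K r -> inst r ps c -> seq_equiv c S -> wf_seq S ->
  Prem K n ps -> derivable K n S.
Proof.
  intros H1 H2 H3 H4 [->|(m & -> & H)].
  - eapply d_leaf; eauto.
  - eapply d_node; eauto.
Qed.

Lemma prem_map K n (acts : list (list lform * list lform)) (h g : list lform * list lform -> sequent) :
  Prem K n (map h acts) ->
  (forall a m, n = S m -> In a acts -> derivable K m (h a) -> derivable K m (g a)) ->
  Prem K n (map g acts).
Proof.
  intros H H0. destruct acts as [|a0 acts]; [left; reflexivity|].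
  destruct H as [H|(m & -> & H)]; [discriminate|].
  right; exists m; split; auto. intros P HP. apply in_map_iff in HP as (a & <- & Ha).
  apply H0; auto. apply H. apply in_map; auto.
Qed.

Lemma prem_in K n ps P : Prem K n ps -> In P ps -> exists m, n = S m /\ derivable K m P.
Proof. intros [->|(m & -> & H)] HP; [destruct HP|eauto]. Qed.

Lemma der_perm K n S T : derivable K n S -> seq_equiv S T -> derivable K n T.
Proof.
  intros H [E1 E2]. apply der_inv in H as (r & ps & c & Hr & Hi & [C1 C2] & Hw & Hp).
  apply der_build with r ps c; auto.
  - split; eapply Permutation_trans; eauto.
  - intros f Hf. apply Hw. eapply Permutation_in; [symmetry; eauto|auto].
Qed.

Definition swap (a b k : nat) : nat := if Nat.eqb k a then b else if Nat.eqb k b then a else k.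

Ltac eqbs := repeat match goal with |- context [Nat.eqb ?x ?y] => destruct (Nat.eqb_spec x y); cbn end.

Lemma swap_invol a b k : swap a b (swap a b k) = k.
Proof. unfold swap. destruct (Nat.eqb_spec k a); destruct (Nat.eqb_spec k b); destruct (Nat.eqb_spec b a); subst; rewrite ?Nat.eqb_refl; repeat match goal with |- context [Nat.eqb ?x ?y] => destruct (Nat.eqb_spec x y); subst end; try congruence. Qed.
Lemma swap_inj a b : injective (swap a b).
Proof. intros x y H. rewrite <- (swap_invol a b x), H. apply swap_invol. Qed.
Lemma swap_fix a b k : k <> a -> k <> b -> swap a b k = k.
Proof. intros. unfold swap. eqbs; congruence. Qed.
Lemma swap_a a b x : swap a b x = a -> x = b.
Proof. unfold swap. destruct (Nat.eqb_spec x a); destruct (Nat.eqb_spec x b); congruence. Qed.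

Inductive lab := LabW (x : nat) | LabN (n : nat).
Definition occ (l : lab) (f : lform) : Prop :=
  match l with LabW x => w_occ x f | LabN n => n_occ (NVar n) f end.
Definition labkind (l : lab) : bool := match l with LabW _ => true | LabN _ => false end.
Definition labnum (l : lab) : nat := match l with LabW x => x | LabN x => x end.
Definition fresh_lab (l : lab) (S : sequent) : Prop := forall f, In f (fst S ++ snd S) -> ~ occ l f.

Definition sw (l1 l2 : lab) : rn :=
  match l1, l2 with
  | LabW a, LabW b => (swap a b, fun n => n)
  | LabN a, LabN b => (fun x => x, swap a b)
  | _, _ => (fun x => x, fun n => n)
  end.

Lemma sw_inj1 l1 l2 : injective (fst (sw l1 l2)).
Proof. destruct l1, l2; simpl; try apply swap_inj; intros ? ? ?; auto. Qed.
Lemma sw_inj2 l1 l2 : injective (snd (sw l1 l2)).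
Proof. destruct l1, l2; simpl; try apply swap_inj; intros ? ? ?; auto. Qed.

Lemma ren_id_on sg f : (forall x, w_occ x f -> fst sg x = x) ->
  (forall n, n_occ (NVar n) f -> snd sg n = n) -> ren_f sg f = f.
Proof.
  intros H1 H2. destruct f; repeat match goal with a : nlab |- _ => destruct a end;
  simpl in *; f_equal; try f_equal; first [apply H1 | apply H2]; auto.
Qed.

Lemma sw_fix l1 l2 f : ~ occ l1 f -> ~ occ l2 f -> ren_f (sw l1 l2) f = f.
Proof.
  intros H1 H2. apply ren_id_on; destruct l1, l2; simpl in *; intros; auto;
  apply swap_fix; intros ->; contradiction.
Qed.

Lemma sw_invol l1 l2 f : ren_f (sw l1 l2) (ren_f (sw l1 l2) f) = f.
Proof.
  destruct f; repeat match goal with a : nlab |- _ => destruct a end;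
  destruct l1, l2; simpl; rewrite ?swap_invol; reflexivity.
Qed.

Lemma sw_occ l1 l2 f : labkind l1 = labkind l2 -> occ l1 (ren_f (sw l1 l2) f) -> occ l2 f.
Proof.
  destruct l1, l2; simpl; intros Hk Ho; try discriminate.
  - apply w_occ_ren in Ho as (x' & Ho & He). simpl in He. apply swap_a in He; subst; auto.
  - apply n_occ_ren in Ho as (x' & Ho & He). simpl in He. apply swap_a in He; subst; auto.
Qed.

Lemma map_sw_fix l1 l2 L : (forall f, In f L -> ~ occ l1 f /\ ~ occ l2 f) ->
  map (ren_f (sw l1 l2)) L = L.
Proof.
  induction L; simpl; intros H; auto. f_equal.
  - apply sw_fix; apply H; auto.
  - apply IHL; auto.
Qed.

Lemma map_sw_invol l1 l2 L : map (ren_f (sw l1 l2)) (map (ren_f (sw l1 l2)) L) = L.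
Proof. induction L; simpl; f_equal; auto using sw_invol. Qed.

Definition nb (a : nlab) : nat := match a with NVar k => k | NSing x => x end.
Definition lb (f : lform) : nat :=
  match f with
  | LNb a x => max (nb a) x | LIn x a => max x (nb a) | LSub a b => max (nb a) (nb b)
  | LW x _ => x | LEx a _ => nb a | LAll a _ => nb a | LCmp x a _ _ => max x (nb a) end.
Lemma occ_bound l f : occ l f -> labnum l <= lb f.
Proof.
  destruct l, f; repeat match goal with a : nlab |- _ => destruct a end; simpl;
  intuition; subst; try discriminate;
  repeat match goal with H : NVar _ = NVar _ |- _ => injection H; clear H; intro end;
  subst; lia.
Qed.
Fixpoint maxl (l : list nat) : nat := match l with [] => 0 | x :: l => max x (maxl l) end.
Lemma maxl_in x l : In x l -> x <= maxl l.
Proof. induction l; simpl; [intros []|]. intros [->|H]; try specialize (IHl H); lia. Qed.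

Lemma fresh_ex (k : bool) (Ls : list lform) (avoid : list lab) :
  exists y, labkind y = k /\ ~ In y avoid /\ forall f, In f Ls -> ~ occ y f.
Proof.
  set (N := S (maxl (map lb Ls) + maxl (map labnum avoid))).
  exists (if k then LabW N else LabN N). split; [destruct k; reflexivity|]. split.
  - intros H. apply (in_map labnum) in H. apply maxl_in in H. destruct k; simpl in H; lia.
  - intros f Hf Ho. apply occ_bound in Ho. apply (in_map lb) in Hf. apply maxl_in in Hf.
    destruct k; simpl in Ho; lia.
Qed.
Definition freshE (e : option lab) (S : sequent) : Prop :=
  match e with None => True | Some l => fresh_lab l S end.

Definition acts_t := list (list lform * list lform).

Definition LeftP (f : lform) (Pl Pr : list lform) (acts : acts_t) (e : option lab) : Prop :=
  match f with
  | LW x (And A B) => Pl = [f] /\ Pr = [] /\ e = None /\ acts = [([LW x A; LW x B], [])]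
  | LW x (Or A B) => Pl = [f] /\ Pr = [] /\ e = None /\ acts = [([LW x A], []); ([LW x B], [])]
  | LW x (Imp A B) => Pl = [f] /\ Pr = [] /\ e = None /\ acts = [([], [LW x A]); ([LW x B], [])]
  | LEx a A => Pl = [f] /\ Pr = [] /\ exists y, e = Some (LabW y) /\ acts = [([LIn y a; LW y A], [])]
  | LCmp x a A B => Pl = [f] /\ Pr = [] /\ exists m, e = Some (LabN m) /\
      acts = [([LNb (NVar m) x; LSub (NVar m) a; LEx (NVar m) A; LAll (NVar m) (Imp A B)], [])]
  | _ => True
  end.

Definition RightP (f : lform) (Pl Pr : list lform) (acts : acts_t) (e : option lab) : Prop :=
  match f with
  | LW x (And A B) => Pl = [] /\ Pr = [f] /\ e = None /\ acts = [([], [LW x A]); ([], [LW x B])]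
  | LW x (Or A B) => Pl = [] /\ Pr = [f] /\ e = None /\ acts = [([], [LW x A; LW x B])]
  | LW x (Imp A B) => Pl = [] /\ Pr = [f] /\ e = None /\ acts = [([LW x A], [LW x B])]
  | LW x (Cond A B) => Pl = [] /\ Pr = [f] /\ exists m, e = Some (LabN m) /\
      acts = [([LNb (NVar m) x; LEx (NVar m) A], [LCmp x (NVar m) A B])]
  | LAll a A => Pl = [] /\ Pr = [f] /\ exists y, e = Some (LabW y) /\ acts = [([LIn y a], [LW y A])]
  | _ => True
  end.

Definition mkp (G D : list lform) (a : list lform * list lform) : sequent := (fst a ++ G, snd a ++ D).

Definition Decomp r ps c Pl Pr acts G0 D0 e : Prop :=
  c = (Pl ++ G0, Pr ++ D0) /\
  ps = map (mkp G0 D0) acts /\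
  freshE e c /\
  (forall G' D', freshE e (Pl ++ G', Pr ++ D') -> inst r (map (mkp G' D') acts) (Pl ++ G', Pr ++ D')) /\
  (forall a f, In a acts -> In f (snd a) -> ~ relational f) /\
  (forall f, In f Pl -> LeftP f Pl Pr acts e) /\
  (forall f, In f Pr -> RightP f Pl Pr acts e).

Ltac dec_fin :=
  repeat split;
  try (match goal with |- forall (G' D' : list lform), _ => idtac end;
       intros G' D' Hf; simpl in *; econstructor; eauto; fail);
  try (match goal with |- forall (a : list lform * list lform) (f : lform), _ => idtac end;
    intros aa ff Ha Hf; simpl in Ha; repeat destruct Ha as [<-|Ha]; try contradiction;
    simpl in Hf; repeat destruct Hf as [<-|Hf]; try contradiction; simpl; auto; fail);
  try (intros f Hf; simpl in Hf; repeat destruct Hf as [<-|Hf]; try contradiction; simpl; auto;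
    try (match goal with t : at_schema |- _ => destruct t end; simpl; auto); repeat split; eauto; fail);
  try assumption.

Lemma decomp r ps c : inst r ps c -> exists Pl Pr acts G0 D0 e, Decomp r ps c Pl Pr acts G0 D0 e.
Proof.
  intros Hi; unfold Decomp; destruct Hi.
  - exists [LW x (Atom p)], [LW x (Atom p)], [], G, D, None. dec_fin.
  - exists [LW x Bot], [], [], G, D, None. dec_fin.
  - exists [LW x (And A B)], [], [([LW x A; LW x B], [])], G, D, None. dec_fin.
  - exists [], [LW x (And A B)], [([], [LW x A]); ([], [LW x B])], G, D, None. dec_fin.
  - exists [LW x (Or A B)], [], [([LW x A], []); ([LW x B], [])], G, D, None. dec_fin.
  - exists [], [LW x (Or A B)], [([], [LW x A; LW x B])], G, D, None. dec_fin.
  - exists [LW x (Imp A B)], [], [([], [LW x A]); ([LW x B], [])], G, D, None. dec_fin.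
  - exists [], [LW x (Imp A B)], [([LW x A], [LW x B])], G, D, None. dec_fin.
  - exists [LIn x a; LAll a A], [], [([LW x A; LIn x a; LAll a A], [])], G, D, None. dec_fin.
  - exists [], [LAll a A], [([LIn x a], [LW x A])], G, D, (Some (LabW x)). dec_fin.
  - exists [LEx a A], [], [([LIn x a; LW x A], [])], G, D, (Some (LabW x)). dec_fin.
  - exists [LIn x a], [LEx a A], [([LIn x a], [LW x A; LEx a A])], G, D, None. dec_fin.
  - exists [], [LW x (Cond A B)], [([LNb (NVar n) x; LEx (NVar n) A], [LCmp x (NVar n) A B])], G, D, (Some (LabN n)). dec_fin.
  - exists [LNb a x; LW x (Cond A B)], [], [([LNb a x; LW x (Cond A B)], [LEx a A]); ([LCmp x a A B; LNb a x; LW x (Cond A B)], [])], G, D, None. dec_fin.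
  - exists [LNb c x; LSub c a], [LCmp x a A B], [([LNb c x; LSub c a], [LCmp x a A B; LEx c A]); ([LNb c x; LSub c a], [LCmp x a A B; LAll c (Imp A B)])], G, D, None. dec_fin.
  - exists [LCmp x a A B], [], [([LNb (NVar n) x; LSub (NVar n) a; LEx (NVar n) A; LAll (NVar n) (Imp A B)], [])], G, D, (Some (LabN n)). dec_fin.
  - exists [], [], [([LSub a a], [])], G, D, None. dec_fin.
  - exists [LSub c b; LSub b a], [], [([LSub c a; LSub c b; LSub b a], [])], G, D, None. dec_fin.
  - exists [LIn x a; LSub a b], [], [([LIn x a; LSub a b; LIn x b], [])], G, D, None. dec_fin.
  - exists [], [], [([LNb (NVar n) x], [])], G, D, (Some (LabN n)). dec_fin.
  - exists [LNb a x], [], [([LIn y a; LNb a x], [])], G, D, (Some (LabW y)). dec_fin.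
  - exists [], [], [([LIn x (NVar n); LNb (NVar n) x], [])], G, D, (Some (LabN n)). dec_fin.
  - exists [LNb a x], [], [([LIn x a; LNb a x], [])], G, D, None. dec_fin.
  - exists [LNb (NSing x) x], [], [([LIn x (NSing x); LNb (NSing x) x], [])], G, D, None. dec_fin.
  - exists [LNb a x], [], [([LNb (NSing x) x; LSub (NSing x) a; LNb a x], [])], G, D, None. dec_fin.
  - exists [LIn y (NSing x); At s x], [], [([LIn y (NSing x); At s x; At s y], [])], G, D, None. dec_fin.
  - exists [LIn y (NSing x); At s y], [], [([LIn y (NSing x); At s x; At s y], [])], G, D, None. dec_fin.
  - exists L', [], [(LIn z (NVar n) :: LNb (NVar n) x :: L', [])], G, D, (Some (LabN n)). dec_fin.
    all: intros f Hf; destruct H as [_ [R HR]];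
         assert (Hf' : In f (L' ++ R)) by (apply in_or_app; auto);
         apply (Permutation_in _ (Permutation_sym HR)) in Hf';
         simpl in Hf'; repeat destruct Hf' as [<-|Hf']; simpl; auto; contradiction.
  - exists L', [], [(LIn z (NVar n) :: LNb (NVar n) y :: L', [])], G, D, (Some (LabN n)). dec_fin.
    all: intros f Hf; destruct H as [_ [R HR]];
         assert (Hf' : In f (L' ++ R)) by (apply in_or_app; auto);
         apply (Permutation_in _ (Permutation_sym HR)) in Hf';
         simpl in Hf'; repeat destruct Hf' as [<-|Hf']; simpl; auto; contradiction.
  - exists L', [], [(LNb b y :: L', [])], G, D, None. dec_fin.
    all: intros f Hf; destruct H as [_ [R HR]];
         assert (Hf' : In f (L' ++ R)) by (apply in_or_app; auto);
         apply (Permutation_in _ (Permutation_sym HR)) in Hf';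
         simpl in Hf'; repeat destruct Hf' as [<-|Hf']; simpl; auto; contradiction.
  - exists [LNb a x; LIn y a; LNb b y], [], [([LNb b x; LNb a x; LIn y a; LNb b y], [])], G, D, None. dec_fin.
Qed.
Definition notin (e : option lab) (L : list lform) : Prop :=
  match e with None => True | Some l => forall f, In f L -> ~ occ l f end.
Definition wfR (L : list lform) : Prop := forall f, In f L -> ~ relational f.

Lemma perm_mid (A B C : list lform) : Permutation (A ++ B ++ C) (B ++ A ++ C).
Proof. rewrite !app_assoc. apply Permutation_app_tail, Permutation_app_comm. Qed.

Lemma weak K n : forall S, derivable K n S -> forall Gl Dr, wfR Dr ->
  derivable K n (Gl ++ fst S, Dr ++ snd S).
Proof.
  induction n as [n IH] using lt_wf_ind. intros S HS.
  destruct (der_inv _ _ _ HS) as (r & ps & c & Hr & Hi & Hce & Hw & Hp).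
  destruct (decomp _ _ _ Hi) as (Pl & Pr & acts & G0 & D0 & e & Hc & Hps & Hfe & Hcl & Hwa & _ & _).
  subst c ps. destruct Hce as [E1 E2]; simpl in E1, E2.
  assert (A : forall Gl Dr, wfR Dr -> notin e (Gl ++ Dr) -> derivable K n (Gl ++ fst S, Dr ++ snd S)).
  { intros Gl Dr HDr Hn.
    apply der_build with r (map (mkp (Gl ++ G0) (Dr ++ D0)) acts) (Pl ++ Gl ++ G0, Pr ++ Dr ++ D0); auto.
    - apply Hcl. destruct e as [l|]; [|exact I]. intros f Hf; simpl in Hf.
      rewrite !in_app_iff in Hf. unfold freshE, fresh_lab in Hfe; simpl in Hfe, Hn.
      destruct Hf as [[Hf|[Hf|Hf]]|[Hf|[Hf|Hf]]];
        first [apply Hfe; rewrite !in_app_iff; tauto | apply Hn; rewrite !in_app_iff; tauto].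
    - split; simpl.
      + eapply Permutation_trans; [apply perm_mid|]. apply Permutation_app_head; auto.
      + eapply Permutation_trans; [apply perm_mid|]. apply Permutation_app_head; auto.
    - intros f Hf; simpl in Hf; apply in_app_or in Hf as [Hf|Hf]; [apply HDr | apply Hw]; auto.
    - apply prem_map with (mkp G0 D0); auto. intros a m -> Ha Hd.
      specialize (IH m (Nat.lt_succ_diag_r m) _ Hd Gl Dr HDr).
      apply (der_perm _ _ _ _ IH). unfold mkp; simpl; split; apply perm_mid. }
  intros Gl Dr HDr. destruct e as [l|]; [|apply A; auto; exact I].
  destruct (fresh_ex (labkind l) (Gl ++ Dr ++ fst S ++ snd S) [l]) as (z & Hk & Hzl & Hz).
  assert (HlS : forall f, In f (fst S ++ snd S) -> ~ occ l f /\ ~ occ z f).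
  { intros f Hf. split.
    - unfold freshE, fresh_lab in Hfe; simpl in Hfe. apply Hfe. apply in_app_or in Hf as [Hf|Hf]; apply in_or_app;
      [left|right]; eapply Permutation_in; [symmetry; eauto| |symmetry; eauto|]; auto.
    - apply Hz. rewrite !in_app_iff in *; tauto. }
  assert (W1 : wfR (map (ren_f (sw l z)) Dr)).
  { intros f Hf. apply in_map_iff in Hf as (g & <- & Hg). rewrite rel_ren. auto. }
  assert (N1 : notin (Some l) (map (ren_f (sw l z)) Gl ++ map (ren_f (sw l z)) Dr)).
  { simpl. intros f Hf Ho. rewrite <- map_app in Hf. apply in_map_iff in Hf as (g & <- & Hg).
    apply sw_occ in Ho; [|auto]. apply (Hz g); auto. rewrite !in_app_iff in *; tauto. }
  pose proof (A _ _ W1 N1) as H1.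
  { apply (der_ren K n _ (sw l z) (sw_inj1 l z) (sw_inj2 l z)) in H1.
    unfold ren_s in H1; simpl in H1. rewrite !map_app, !map_sw_invol in H1.
    rewrite (map_sw_fix l z (fst S)), (map_sw_fix l z (snd S)) in H1; auto;
    intros f Hf; apply HlS; apply in_or_app; auto. }
Qed.
Lemma wl K n G D F : derivable K n (G, D) -> derivable K n (F :: G, D).
Proof. intros H. apply (weak K n _ H [F] []). intros f []. Qed.
Lemma wr K n G D F : ~ relational F -> derivable K n (G, D) -> derivable K n (G, F :: D).
Proof. intros HF H. apply (weak K n _ H [] [F]). intros f [<-|[]]; auto. Qed.
Lemma wl_mid K n G1 G2 D F : derivable K n (G1 ++ G2, D) -> derivable K n (G1 ++ F :: G2, D).
Proof. intros H. apply (wl K n _ _ F) in H. eapply der_perm; [exact H|]. split; simpl; auto. apply Permutation_middle. Qed.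
Lemma wr_mid K n G D1 D2 F : ~ relational F -> derivable K n (G, D1 ++ D2) -> derivable K n (G, D1 ++ F :: D2).
Proof. intros HF H. apply (wr K n _ _ F HF) in H. eapply der_perm; [exact H|]. split; simpl; auto. apply Permutation_middle. Qed.

Definition InvL (phi : lform) (rep : lab -> sequent) (k : bool) : Prop :=
 (forall y f, In f (snd (rep y)) -> ~ relational f) /\
 (forall y l f, In f (fst (rep y) ++ snd (rep y)) -> occ l f -> occ l phi \/ l = y) /\
 (forall y z, labkind y = k -> labkind z = k -> ~ occ y phi -> ~ occ z phi -> ren_s (sw y z) (rep z) = rep y) /\
 (forall Pl Pr acts e, LeftP phi Pl Pr acts e -> Pl = [phi] /\ Pr = [] /\
    exists m, labkind m = k /\ In (rep m) acts /\ (e = Some m \/ (e = None /\ forall y, rep y = rep m))).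

Lemma ren_rep sg (R1 R2 : sequent) : ren_s sg R1 = R2 ->
  map (ren_f sg) (fst R1) = fst R2 /\ map (ren_f sg) (snd R1) = snd R2.
Proof. intros <-; split; reflexivity. Qed.

Theorem invL K phi rep k (H : InvL phi rep k) n : forall S, derivable K n S ->
  forall G D y, seq_equiv S (phi :: G, D) -> labkind y = k -> fresh_lab y (phi :: G, D) ->
  derivable K n (fst (rep y) ++ G, snd (rep y) ++ D).
Proof.
  destruct H as (Hwf & Hocc & Hren & Hprin).
  induction n as [n IH] using lt_wf_ind. intros S HS G D y Heq Hk Hy.
  destruct (der_inv _ _ _ HS) as (r & ps & c & Hr & Hi & Hce & Hw & Hp).
  destruct (decomp _ _ _ Hi) as (Pl & Pr & acts & G0 & D0 & e & Hc & Hps & Hfe & Hcl & Hwa & HL & HR).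
  subst c ps. destruct Hce as [E1 E2]; destruct Heq as [E3 E4]; simpl in *.
  pose proof (Permutation_trans E1 E3) as F1. pose proof (Permutation_trans E2 E4) as F2.
  clear E1 E2.
  assert (HwD : wfR D). { intros f Hf; apply Hw. eapply Permutation_in; [symmetry; exact E4|auto]. }
  assert (Hfe' : forall l f, e = Some l -> In f (Pl ++ G0 ++ Pr ++ D0) -> ~ occ l f).
  { intros l f -> Hf. unfold freshE, fresh_lab in Hfe; simpl in Hfe. apply Hfe. rewrite !in_app_iff in *; tauto. }
  set (Ls := phi :: G ++ D ++ Pl ++ G0 ++ Pr ++ D0 ++ flat_map (fun a => fst a ++ snd a) acts).
  destruct (fresh_ex k Ls (match e with Some l => [l] | None => [] end)) as (y' & Hk' & Hne & Hfy').
  assert (HLa : forall a f, In a acts -> In f (fst a ++ snd a) -> In f Ls).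
  { intros a f Ha Hf. unfold Ls. right. rewrite !in_app_iff. right; right; right; right; right; right.
    apply in_flat_map. eauto. }
  assert (Hphi : In phi (Pl ++ G0)) by (eapply Permutation_in; [symmetry; exact F1 | left; reflexivity]).
  assert (Hy'phi : ~ occ y' phi) by (apply Hfy'; left; reflexivity).
  assert (Main : derivable K n (fst (rep y') ++ G, snd (rep y') ++ D)).
  { apply in_app_or in Hphi as [Hphi|Hphi].
    - destruct (Hprin _ _ _ _ (HL phi Hphi)) as (-> & -> & m & Hkm & Hin & Hem).
      simpl in F1, F2. apply Permutation_cons_inv in F1.
      destruct (prem_in K n _ _ Hp (in_map (mkp G0 D0) _ _ Hin)) as (m' & -> & Hd).
      apply der_mono with m'; [|lia].
      destruct Hem as [-> | [-> Hc]].
      + apply (der_ren K m' _ (sw y' m) (sw_inj1 _ _) (sw_inj2 _ _)) in Hd.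
        unfold mkp, ren_s in Hd; simpl in Hd; rewrite !map_app in Hd.
        assert (Hm : forall f, In f ([phi] ++ G0 ++ [] ++ D0) -> ~ occ m f) by (intros; eapply Hfe'; eauto).
        destruct (ren_rep _ _ _ (Hren y' m Hk' Hkm Hy'phi (Hm phi (or_introl eq_refl)))) as [R1 R2].
        rewrite R1, R2 in Hd.
        rewrite (map_sw_fix y' m G0), (map_sw_fix y' m D0) in Hd.
        * eapply der_perm; [exact Hd|]. split; simpl; apply Permutation_app_head; auto.
        * intros f Hf; split; [apply Hfy'; unfold Ls; right; rewrite !in_app_iff; tauto|apply Hm; simpl; rewrite !in_app_iff; tauto].
        * intros f Hf; split; [apply Hfy'; unfold Ls; right; rewrite !in_app_iff; tauto|apply Hm; simpl; rewrite !in_app_iff; tauto].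
      + rewrite (Hc y'). eapply der_perm; [exact Hd|]. split; simpl; apply Permutation_app_head; auto.
    - apply in_split in Hphi as (Ga & Gb & ->).
      assert (HG : Permutation G (Pl ++ Ga ++ Gb)).
      { apply Permutation_cons_inv with phi. symmetry. eapply Permutation_trans; [|exact F1].
        rewrite !app_assoc. apply Permutation_middle. }
      apply der_build with r (map (mkp (fst (rep y') ++ Ga ++ Gb) (snd (rep y') ++ D0)) acts)
        (Pl ++ fst (rep y') ++ Ga ++ Gb, Pr ++ snd (rep y') ++ D0); auto.
      + apply Hcl. destruct e as [l|]; [|exact I]. intros f Hf Ho.
        simpl in Hf. rewrite !in_app_iff in Hf.
        destruct Hf as [[Hf|[Hf|Hf]]|[Hf|[Hf|Hf]]];
        try (apply (Hfe' l f eq_refl); [rewrite !in_app_iff; simpl; rewrite ?in_app_iff; tauto|exact Ho]).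
        * destruct (Hocc y' l f) as [Hq1 | ->]; auto. apply in_or_app; auto.
          apply (Hfe' l phi eq_refl); auto. rewrite !in_app_iff; simpl; tauto.
          apply Hne; left; auto.
        * destruct (Hocc y' l f) as [Hq1 | ->]; auto. apply in_or_app; auto.
          apply (Hfe' l phi eq_refl); auto. rewrite !in_app_iff; simpl; tauto.
          apply Hne; left; auto.
      + split; simpl.
        * eapply Permutation_trans; [apply perm_mid|]. apply Permutation_app_head. symmetry; auto.
        * eapply Permutation_trans; [apply perm_mid|]. apply Permutation_app_head. auto.
      + intros f Hf; simpl in Hf. apply in_app_or in Hf as [Hf|Hf]; [eapply Hwf; eauto|auto].
      + apply prem_map with (mkp (Ga ++ phi :: Gb) D0); auto. intros a m -> Ha Hd.
        assert (Hq : seq_equiv (mkp (Ga ++ phi :: Gb) D0 a) (phi :: fst a ++ Ga ++ Gb, snd a ++ D0)).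
        { unfold mkp; split; simpl; auto. rewrite !app_assoc. symmetry. apply Permutation_middle. }
        assert (Hf2 : fresh_lab y' (phi :: fst a ++ Ga ++ Gb, snd a ++ D0)).
        { intros f Hf. apply Hfy'. simpl in Hf. rewrite !in_app_iff in Hf.
          destruct Hf as [<-|[[Hf|[Hf|Hf]]|[Hf|Hf]]]; try (left; reflexivity);
          try (eapply HLa; eauto; apply in_or_app; auto; fail);
          unfold Ls; right; rewrite !in_app_iff; simpl; tauto. }
        specialize (IH m (Nat.lt_succ_diag_r m) _ Hd (fst a ++ Ga ++ Gb) (snd a ++ D0) y' Hq Hk' Hf2).
        eapply der_perm; [exact IH|]. unfold mkp; split; simpl; apply perm_mid. }
  apply (der_ren K n _ (sw y y') (sw_inj1 _ _) (sw_inj2 _ _)) in Main.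
  unfold ren_s in Main; simpl in Main; rewrite !map_app in Main.
  assert (Hyphi : ~ occ y phi) by (apply Hy; left; reflexivity).
  destruct (ren_rep _ _ _ (Hren y y' Hk Hk' Hyphi Hy'phi)) as [R1 R2].
  rewrite R1, R2 in Main.
  rewrite (map_sw_fix y y' G), (map_sw_fix y y' D) in Main; auto.
  - intros f Hf; split; [apply Hy; simpl; rewrite !in_app_iff; tauto|apply Hfy'; unfold Ls; simpl; rewrite !in_app_iff; tauto].
  - intros f Hf; split; [apply Hy; simpl; rewrite !in_app_iff; tauto|apply Hfy'; unfold Ls; simpl; rewrite !in_app_iff; tauto].
Qed.
Definition InvR (phi : lform) (rep : lab -> sequent) (k : bool) : Prop :=
 (forall y f, In f (snd (rep y)) -> ~ relational f) /\
 (forall y l f, In f (fst (rep y) ++ snd (rep y)) -> occ l f -> occ l phi \/ l = y) /\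
 (forall y z, labkind y = k -> labkind z = k -> ~ occ y phi -> ~ occ z phi -> ren_s (sw y z) (rep z) = rep y) /\
 (forall Pl Pr acts e, RightP phi Pl Pr acts e -> Pl = [] /\ Pr = [phi] /\
    exists m, labkind m = k /\ In (rep m) acts /\ (e = Some m \/ (e = None /\ forall y, rep y = rep m))).

Theorem invR K phi rep k (H : InvR phi rep k) n : forall S, derivable K n S ->
  forall G D y, seq_equiv S (G, phi :: D) -> labkind y = k -> fresh_lab y (G, phi :: D) ->
  derivable K n (fst (rep y) ++ G, snd (rep y) ++ D).
Proof.
  destruct H as (Hwf & Hocc & Hren & Hprin).
  induction n as [n IH] using lt_wf_ind. intros S HS G D y Heq Hk Hy.
  destruct (der_inv _ _ _ HS) as (r & ps & c & Hr & Hi & Hce & Hw & Hp).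
  destruct (decomp _ _ _ Hi) as (Pl & Pr & acts & G0 & D0 & e & Hc & Hps & Hfe & Hcl & Hwa & HL & HR).
  subst c ps. destruct Hce as [E1 E2]; destruct Heq as [E3 E4]; simpl in *.
  pose proof (Permutation_trans E1 E3) as F1. pose proof (Permutation_trans E2 E4) as F2.
  clear E1 E2.
  assert (HwD : wfR D). { intros f Hf; apply Hw. eapply Permutation_in; [symmetry; exact E4|right; auto]. }
  assert (Hfe' : forall l f, e = Some l -> In f (Pl ++ G0 ++ Pr ++ D0) -> ~ occ l f).
  { intros l f -> Hf. unfold freshE, fresh_lab in Hfe; simpl in Hfe. apply Hfe. rewrite !in_app_iff in *; tauto. }
  set (Ls := phi :: G ++ D ++ Pl ++ G0 ++ Pr ++ D0 ++ flat_map (fun a => fst a ++ snd a) acts).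
  destruct (fresh_ex k Ls (match e with Some l => [l] | None => [] end)) as (y' & Hk' & Hne & Hfy').
  assert (HLa : forall a f, In a acts -> In f (fst a ++ snd a) -> In f Ls).
  { intros a f Ha Hf. unfold Ls. right. rewrite !in_app_iff. right; right; right; right; right; right.
    apply in_flat_map. eauto. }
  assert (Hphi : In phi (Pr ++ D0)) by (eapply Permutation_in; [symmetry; exact F2 | left; reflexivity]).
  assert (Hy'phi : ~ occ y' phi) by (apply Hfy'; left; reflexivity).
  assert (Main : derivable K n (fst (rep y') ++ G, snd (rep y') ++ D)).
  { apply in_app_or in Hphi as [Hphi|Hphi].
    - destruct (Hprin _ _ _ _ (HR phi Hphi)) as (-> & -> & m & Hkm & Hin & Hem).
      simpl in F1, F2. apply Permutation_cons_inv in F2.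
      destruct (prem_in K n _ _ Hp (in_map (mkp G0 D0) _ _ Hin)) as (m' & -> & Hd).
      apply der_mono with m'; [|lia].
      destruct Hem as [-> | [-> Hc]].
      + apply (der_ren K m' _ (sw y' m) (sw_inj1 _ _) (sw_inj2 _ _)) in Hd.
        unfold mkp, ren_s in Hd; simpl in Hd; rewrite !map_app in Hd.
        assert (Hm : forall f, In f ([] ++ G0 ++ [phi] ++ D0) -> ~ occ m f) by (intros; eapply Hfe'; eauto).
        assert (Hmphi : ~ occ m phi) by (apply Hm; simpl; rewrite !in_app_iff; simpl; tauto).
        destruct (ren_rep _ _ _ (Hren y' m Hk' Hkm Hy'phi Hmphi)) as [R1 R2].
        rewrite R1, R2 in Hd.
        rewrite (map_sw_fix y' m G0), (map_sw_fix y' m D0) in Hd.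
        * eapply der_perm; [exact Hd|]. split; simpl; apply Permutation_app_head; auto.
        * intros f Hf; split; [apply Hfy'; unfold Ls; right; rewrite !in_app_iff; tauto|apply Hm; simpl; rewrite !in_app_iff; simpl; tauto].
        * intros f Hf; split; [apply Hfy'; unfold Ls; right; rewrite !in_app_iff; tauto|apply Hm; simpl; rewrite !in_app_iff; tauto].
      + rewrite (Hc y'). eapply der_perm; [exact Hd|]. split; simpl; apply Permutation_app_head; auto.
    - apply in_split in Hphi as (Da & Db & ->).
      assert (HD : Permutation D (Pr ++ Da ++ Db)).
      { apply Permutation_cons_inv with phi. symmetry. eapply Permutation_trans; [|exact F2].
        rewrite !app_assoc. apply Permutation_middle. }
      apply der_build with r (map (mkp (fst (rep y') ++ G0) (snd (rep y') ++ Da ++ Db)) acts)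
        (Pl ++ fst (rep y') ++ G0, Pr ++ snd (rep y') ++ Da ++ Db); auto.
      + apply Hcl. destruct e as [l|]; [|exact I]. intros f Hf Ho.
        simpl in Hf. rewrite !in_app_iff in Hf.
        destruct Hf as [[Hf|[Hf|Hf]]|[Hf|[Hf|Hf]]];
        try (apply (Hfe' l f eq_refl); [rewrite !in_app_iff; simpl; rewrite ?in_app_iff; tauto|exact Ho]).
        * destruct (Hocc y' l f) as [Hq1 | ->]; auto. apply in_or_app; auto.
          apply (Hfe' l phi eq_refl); auto. rewrite !in_app_iff; simpl; tauto.
          apply Hne; left; auto.
        * destruct (Hocc y' l f) as [Hq1 | ->]; auto. apply in_or_app; auto.
          apply (Hfe' l phi eq_refl); auto. rewrite !in_app_iff; simpl; tauto.
          apply Hne; left; auto.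
      + split; simpl.
        * eapply Permutation_trans; [apply perm_mid|]. apply Permutation_app_head. auto.
        * eapply Permutation_trans; [apply perm_mid|]. apply Permutation_app_head. symmetry; auto.
      + intros f Hf; simpl in Hf. apply in_app_or in Hf as [Hf|Hf]; [eapply Hwf; eauto|auto].
      + apply prem_map with (mkp G0 (Da ++ phi :: Db)); auto. intros a m -> Ha Hd.
        assert (Hq : seq_equiv (mkp G0 (Da ++ phi :: Db) a) (fst a ++ G0, phi :: snd a ++ Da ++ Db)).
        { unfold mkp; split; simpl; auto. rewrite !app_assoc. symmetry. apply Permutation_middle. }
        assert (Hf2 : fresh_lab y' (fst a ++ G0, phi :: snd a ++ Da ++ Db)).
        { intros f Hf. apply Hfy'. simpl in Hf. rewrite !in_app_iff in Hf. simpl in Hf. rewrite !in_app_iff in Hf.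
          destruct Hf as [[Hf|Hf]|[<-|[Hf|[Hf|Hf]]]]; try (left; reflexivity);
          try (eapply HLa; eauto; apply in_or_app; auto; fail);
          unfold Ls; right; rewrite !in_app_iff; simpl; tauto. }
        specialize (IH m (Nat.lt_succ_diag_r m) _ Hd (fst a ++ G0) (snd a ++ Da ++ Db) y' Hq Hk' Hf2).
        eapply der_perm; [exact IH|]. unfold mkp; split; simpl; apply perm_mid. }
  apply (der_ren K n _ (sw y y') (sw_inj1 _ _) (sw_inj2 _ _)) in Main.
  unfold ren_s in Main; simpl in Main; rewrite !map_app in Main.
  assert (Hyphi : ~ occ y phi) by (apply Hy; simpl; apply in_or_app; right; left; reflexivity).
  destruct (ren_rep _ _ _ (Hren y y' Hk Hk' Hyphi Hy'phi)) as [R1 R2].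
  rewrite R1, R2 in Main.
  rewrite (map_sw_fix y y' G), (map_sw_fix y y' D) in Main; auto.
  - intros f Hf; split; [apply Hy; simpl; rewrite !in_app_iff; simpl; tauto|apply Hfy'; unfold Ls; simpl; rewrite !in_app_iff; tauto].
  - intros f Hf; split; [apply Hy; simpl; rewrite !in_app_iff; simpl; tauto|apply Hfy'; unfold Ls; simpl; rewrite !in_app_iff; tauto].
Qed.
Lemma swap_b a b : swap a b b = a.
Proof. unfold swap. destruct (Nat.eqb_spec b a); [auto|]. rewrite Nat.eqb_refl; auto. Qed.
Lemma rnW x y a : ~ w_in_nlab x a -> ~ w_in_nlab y a -> ren_n (swap x y, fun n => n) a = a.
Proof. destruct a; simpl; intros; auto. rewrite swap_fix; auto. Qed.
Lemma rnN x y a : a <> NVar x -> a <> NVar y -> ren_n (fun x => x, swap x y) a = a.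
Proof. destruct a; simpl; intros; auto. rewrite swap_fix; auto; intros ->; auto. Qed.

Ltac occ_tac := intros y l f Hf Ho; destruct y; simpl in Hf;
  repeat destruct Hf as [<-|Hf]; try contradiction;
  destruct l; simpl in *;
  repeat match goal with H : _ \/ _ |- _ => destruct H end; try contradiction;
  repeat match goal with H : NVar _ = NVar _ |- _ => injection H as H end; subst;
  solve [ left; firstorder | right; congruence | left; left; congruence | left; right; congruence
        | auto ].

Lemma Inv_exL a A : InvL (LEx a A)
  (fun y => match y with LabW w => ([LIn w a; LW w A], []) | LabN _ => ([], []) end) true.
Proof.
  split; [|split; [|split]].
  - intros y f; destruct y; simpl; tauto.
  - occ_tac.
  - intros y z Hy Hz Hoy Hoz; destruct y, z; try discriminate; unfold ren_s; simpl in *.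
    rewrite swap_b, rnW; auto.
  - intros Pl Pr acts e HP; simpl in HP; destruct HP as (-> & -> & w & -> & ->).
    repeat split; exists (LabW w); repeat split; simpl; auto.
Qed.

Lemma Inv_barL x a A B : InvL (LCmp x a A B)
  (fun y => match y with LabN m => ([LNb (NVar m) x; LSub (NVar m) a; LEx (NVar m) A; LAll (NVar m) (Imp A B)], []) | LabW _ => ([], []) end) false.
Proof.
  split; [|split; [|split]].
  - intros y f; destruct y; simpl; tauto.
  - occ_tac.
  - intros y z Hy Hz Hoy Hoz; destruct y, z; try discriminate; unfold ren_s; simpl in *.
    rewrite swap_b, rnN; auto.
  - intros Pl Pr acts e HP; simpl in HP; destruct HP as (-> & -> & w & -> & ->).
    repeat split; exists (LabN w); repeat split; simpl; auto.
Qed.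

Lemma Inv_allR a A : InvR (LAll a A)
  (fun y => match y with LabW w => ([LIn w a], [LW w A]) | LabN _ => ([], []) end) true.
Proof.
  split; [|split; [|split]].
  - intros y f; destruct y; simpl; [intros [<-|[]]; simpl; auto|tauto].
  - occ_tac.
  - intros y z Hy Hz Hoy Hoz; destruct y, z; try discriminate; unfold ren_s; simpl in *.
    rewrite swap_b, rnW; auto.
  - intros Pl Pr acts e HP; simpl in HP; destruct HP as (-> & -> & w & -> & ->).
    repeat split; exists (LabW w); repeat split; simpl; auto.
Qed.

Lemma Inv_condR x A B : InvR (LW x (Cond A B))
  (fun y => match y with LabN m => ([LNb (NVar m) x; LEx (NVar m) A], [LCmp x (NVar m) A B]) | LabW _ => ([], []) end) false.
Proof.
  split; [|split; [|split]].
  - intros y f; destruct y; simpl; [tauto|intros [<-|[]]; simpl; auto].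
  - occ_tac.
  - intros y z Hy Hz Hoy Hoz; destruct y, z; try discriminate; unfold ren_s; simpl in *.
    rewrite swap_b; auto.
  - intros Pl Pr acts e HP; simpl in HP; destruct HP as (-> & -> & w & -> & ->).
    repeat split; exists (LabN w); repeat split; simpl; auto.
Qed.
Lemma seq_refl S : seq_equiv S S.
Proof. split; apply Permutation_refl. Qed.

Lemma InvL_const phi R :
  (forall f, In f (snd R) -> ~ relational f) ->
  (forall l f, In f (fst R ++ snd R) -> occ l f -> occ l phi) ->
  (forall Pl Pr acts e, LeftP phi Pl Pr acts e -> Pl = [phi] /\ Pr = [] /\ e = None /\ In R acts) ->
  InvL phi (fun _ => R) true.
Proof.
  intros H1 H2 H3. split; [|split; [|split]].
  - intros _; auto.
  - intros y l f Hf Ho. left; eauto.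
  - intros y z _ _ Hy Hz. destruct R as [R1 R2]. unfold ren_s; simpl.
    rewrite !map_sw_fix; auto; intros f Hf; split; intro Ho;
    [apply Hy | apply Hz | apply Hy | apply Hz]; eapply H2; eauto; simpl; apply in_or_app; auto.
  - intros Pl Pr acts e HP. destruct (H3 _ _ _ _ HP) as (-> & -> & -> & Hin).
    repeat split; auto. exists (LabW 0). repeat split; auto.
Qed.

Lemma InvR_const phi R :
  (forall f, In f (snd R) -> ~ relational f) ->
  (forall l f, In f (fst R ++ snd R) -> occ l f -> occ l phi) ->
  (forall Pl Pr acts e, RightP phi Pl Pr acts e -> Pl = [] /\ Pr = [phi] /\ e = None /\ In R acts) ->
  InvR phi (fun _ => R) true.
Proof.
  intros H1 H2 H3. split; [|split; [|split]].
  - intros _; auto.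
  - intros y l f Hf Ho. left; eauto.
  - intros y z _ _ Hy Hz. destruct R as [R1 R2]. unfold ren_s; simpl.
    rewrite !map_sw_fix; auto; intros f Hf; split; intro Ho;
    [apply Hy | apply Hz | apply Hy | apply Hz]; eapply H2; eauto; simpl; apply in_or_app; auto.
  - intros Pl Pr acts e HP. destruct (H3 _ _ _ _ HP) as (-> & -> & -> & Hin).
    repeat split; auto. exists (LabW 0). repeat split; auto.
Qed.

Lemma useL K n phi R G D : InvL phi (fun _ => R) true -> derivable K n (phi :: G, D) ->
  derivable K n (fst R ++ G, snd R ++ D).
Proof.
  intros H Hd. destruct (fresh_ex true ((phi :: G) ++ D) []) as (y & Hk & _ & Hy).
  exact (invL K phi (fun _ => R) true H n _ Hd G D y (seq_refl _) Hk Hy).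
Qed.

Lemma useR K n phi R G D : InvR phi (fun _ => R) true -> derivable K n (G, phi :: D) ->
  derivable K n (fst R ++ G, snd R ++ D).
Proof.
  intros H Hd. destruct (fresh_ex true (G ++ phi :: D) []) as (y & Hk & _ & Hy).
  exact (invR K phi (fun _ => R) true H n _ Hd G D y (seq_refl _) Hk Hy).
Qed.

Ltac cc1 := intros f Hf; simpl in Hf; repeat destruct Hf as [<-|Hf]; try contradiction; simpl; auto.
Ltac cc2 := intros l f Hf Ho; simpl in Hf; repeat destruct Hf as [<-|Hf]; try contradiction;
    destruct l; simpl in *; auto.
Ltac cc3 := intros Pl Pr acts e HP; simpl in HP; destruct HP as (-> & -> & -> & ->); repeat split; simpl; auto.

Theorem mainTheorem11 :
  forall (K : calculus) (r : rule), in_calc K r ->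
  forall (ps : list sequent) (c : sequent), inst r ps c ->
  forall n : nat, derivable K n c ->
  forall P : sequent, In P ps -> derivable K n P.
Proof.
  intros K r Hr ps c Hi n Hd P HP.
  destruct Hi; simpl in HP; repeat destruct HP as [<-|HP]; try contradiction;
  try solve [ exact Hd | apply wl; exact Hd | apply wl, wl; exact Hd
            | apply (wl_mid K n [_]); exact Hd | apply (wl_mid K n [_;_]); exact Hd
            | apply wr; [simpl; tauto | exact Hd]
            | apply (wr_mid K n _ [_]); [simpl; tauto | exact Hd] ].
  - apply (useL K n (LW x (And A B)) ([LW x A; LW x B], []) G D); [apply InvL_const; [cc1|cc2|cc3] | exact Hd].
  - apply (useR K n (LW x (And A B)) ([], [LW x A]) G D); [apply InvR_const; [cc1|cc2|cc3] | exact Hd].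
  - apply (useR K n (LW x (And A B)) ([], [LW x B]) G D); [apply InvR_const; [cc1|cc2|cc3] | exact Hd].
  - apply (useL K n (LW x (Or A B)) ([LW x A], []) G D); [apply InvL_const; [cc1|cc2|cc3] | exact Hd].
  - apply (useL K n (LW x (Or A B)) ([LW x B], []) G D); [apply InvL_const; [cc1|cc2|cc3] | exact Hd].
  - apply (useR K n (LW x (Or A B)) ([], [LW x A; LW x B]) G D); [apply InvR_const; [cc1|cc2|cc3] | exact Hd].
  - apply (useL K n (LW x (Imp A B)) ([], [LW x A]) G D); [apply InvL_const; [cc1|cc2|cc3] | exact Hd].
  - apply (useL K n (LW x (Imp A B)) ([LW x B], []) G D); [apply InvL_const; [cc1|cc2|cc3] | exact Hd].
  - apply (useR K n (LW x (Imp A B)) ([LW x A], [LW x B]) G D); [apply InvR_const; [cc1|cc2|cc3] | exact Hd].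
  - exact (invR K (LAll a A) _ true (Inv_allR a A) n _ Hd G D (LabW x) (seq_refl _) eq_refl H).
  - exact (invL K (LEx a A) _ true (Inv_exL a A) n _ Hd G D (LabW x) (seq_refl _) eq_refl H).
  - match goal with H : n_fresh ?m _ |- _ =>
      exact (invR K (LW x (Cond A B)) _ false (Inv_condR x A B) n _ Hd G D (LabN m) (seq_refl _) eq_refl H) end.
  - match goal with H : n_fresh ?m _ |- _ =>
      exact (invL K (LCmp x a A B) _ false (Inv_barL x a A B) n _ Hd G D (LabN m) (seq_refl _) eq_refl H) end.
Qed.
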